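(* For every $\alpha$-formula $\alpha$ with components $\alpha_1,\alpha_2$, the formula $\alpha\leftrightarrow\alpha_1\wedge\alpha_2$ is valid (where, if $\alpha$ has only one component, $\alpha_1\wedge\alpha_2$ means $\alpha_1$), and for every $\beta$-formula $\beta$ with components $\beta_1,\beta_2$, the formula $\beta\leftrightarrow\beta_1\vee\beta_2$ is valid.
   Context: $\tau$PDL syntax: formulas $\varphi::=p\mid\neg\varphi\mid\forall A.\varphi\mid\mathsf C_\imath A$, programs $A::=a\mid\varphi\mid\varphi\Rightarrow\varphi\mid AA\mid A+A\mid A^*$ ($p$ atomic formula, $a$ atomic program, $\imath$ agent), interpreted in $\mathcal L$-models by the standard relational semantics of $\tau$PDL: $\forall A.\varphi$ is the box $[A]\varphi$, tests $\varphi$ denote $\{(w,w):w\models\varphi\}$, $\to_{AB}=\to_A\circ\to_B$, $\to_{A+B}=\to_A\cup\to_B$, $\to_{A^*}$ is the reflexive-transitive closure, $\to_{\varphi\Rightarrow\psi}=\bigcup\{\to_A: A\in\Sigma^+,\forall w\models\varphi\,\forall w'(w\to_Aw'\Rightarrow w'\models\psi)\}$ with $\Sigma^+$ the finite nonempty compositions of atomic programs, tests and $\varphi\Rightarrow\psi$ terms; capabilities: $w\models\mathsf C_\imath a$ iff $\to_a\subseteq\imath^M(w)$, $\mathsf C_\imath\varphi$ always true, $w\models\mathsf C_\imath(\varphi\Rightarrow\psi)$ iff $\to_{\varphi\Rightarrow\psi}\subseteq\imath^M(w)$, $\mathsf C_\imath(AB)$ true at $w$ iff $w\models\mathsf C_\imath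 A$ and every $A$-successor satisfies $\mathsf C_\imath B$, $[\![\mathsf C_\imath(A+B)]\!]=[\![\mathsf C_\imath A]\!]\cap[\![\mathsf C_\imath B]\!]$, $[\![\mathsf C_\imath A^*]\!]=\bigcup\{[\![\varphi]\!]:[\![\varphi]\!]\subseteq[\![\mathsf C_\imath A]\!]\cap[\![\forall A.\varphi]\!]\}$; and the normality condition $\imath^M(w)=\bigcup\{\to_{\varphi\Rightarrow\psi}:w\models\mathsf C_\imath(\varphi\Rightarrow\psi)\}\cup\bigcup\{\to_a:w\models\mathsf C_\imath a\}$. $\mathsf{tt}$ is a tautology, $\Omega:=\mathsf{tt}\Rightarrow\mathsf{tt}$; $\wedge,\vee$ are the usual abbreviations. $\alpha$-formulas and their components $(\alpha_1;\alpha_2)$: $\neg\neg\varphi:(\varphi)$; $\neg\forall\psi.\varphi:(\neg\varphi;\psi)$; $\forall AB.\varphi:(\forall A.\forall B.\varphi)$; $\neg\forall AB.\varphi:(\neg\forall A.\forall B.\varphi)$; $\forall(A+B).\varphi:(\forall A.\varphi;\forall B.\varphi)$; $\forall A^*.\varphi:(\varphi;\forall A.\forall A^*.\varphi)$; $\mathsf C_\imath(AB):(\mathsf C_\imath A;\forall A.\mathsf C_\imath B)$; $\mathsf C_\imath(A+B):(\mathsf C_\imath A;\mathsf C_\imath B)$; $\mathsf C_\imath(A^* ):(\forall A^*.\mathsf C_\imath A)$; $\neg\mathsf C_\imath(A^* ):(\neg\forall A^*.\mathsf C_\imath A)$. $\beta$-formulas and components $(\beta_1;\beta_2)$: $\forall\psi.\varphi:(\neg\psi;\varphi)$;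 $\forall(\varphi\Rightarrow\psi).\vartheta:(\varphi\wedge\forall\Omega^*.\forall\psi.\vartheta;\ \forall\Omega^*.\vartheta)$; $\neg\forall(\varphi\Rightarrow\psi).\vartheta:(\neg\forall(\neg\varphi).\forall\Omega.\vartheta;\ \neg\forall\Omega.\forall\psi.\vartheta)$; $\neg\forall(A+B).\varphi:(\neg\forall A.\varphi;\neg\forall B.\varphi)$; $\neg\forall A^*.\varphi:(\neg\varphi;\neg\forall A.\forall A^*.\varphi)$; $\neg\mathsf C_\imath(AB):(\neg\mathsf C_\imath A;\neg\forall A.\mathsf C_\imath B)$; $\neg\mathsf C_\imath(A+B):(\neg\mathsf C_\imath A;\neg\mathsf C_\imath B)$. A formula is valid if true at every state of every $\mathcal L$-model. *)

(* Defs.v *)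
From Stdlib Require Import Relations.Relation_Operators.

Definition atom := nat.
Definition aprog := nat.
Definition agent := nat.

Inductive form : Type :=
| Atom : atom -> form
| Neg : form -> form
| Box : prog -> form -> form
| Cap : agent -> prog -> form
with prog : Type :=
| PAtom : aprog -> prog
| Test : form -> prog
| Arrow : form -> form -> prog
| Seq : prog -> prog -> prog
| Choice : prog -> prog -> prog
| Star : prog -> prog.

Definition Impl (phi psi : form) : form := Box (Test phi) psi.
Definition And (phi psi : form) : form := Neg (Impl phi (Neg psi)).
Definition Or (phi psi : form) : form := Impl (Neg phi) psi.
Definition Iff (phi psi : form) : form := And (Impl phi psi) (Impl psi phi).
Definition tt : form := Impl (Atom 0) (Atom 0).
Definition Omega : prog := Arrow tt tt.

Inductive SigmaPlus : prog -> Prop :=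
| SP_atom a : SigmaPlus (PAtom a)
| SP_test phi : SigmaPlus (Test phi)
| SP_arrow phi psi : SigmaPlus (Arrow phi psi)
| SP_seq A B : SigmaPlus A -> SigmaPlus B -> SigmaPlus (Seq A B).

(* An L-model: states W, a truth relation, the program relations ->_A and the
   agent capability relations i^M(w), subject to the (non-structural, hence
   axiomatically imposed) clauses of the tauPDL semantics and normality. *)
Record Lmodel : Type := {
  W : Type;
  sat : W -> form -> Prop;
  rel : prog -> W -> W -> Prop;
  agrel : agent -> W -> W -> W -> Prop;
  sat_neg : forall w phi, sat w (Neg phi) <-> ~ sat w phi;
  sat_box : forall w A phi,
      sat w (Box A phi) <-> (forall w', rel A w w' -> sat w' phi);
  sat_cap_atom : forall w i a,
      sat w (Cap i (PAtom a)) <-> (forall u v, rel (PAtom a) u v -> agrel i w u v);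
  sat_cap_test : forall w i phi, sat w (Cap i (Test phi));
  sat_cap_arrow : forall w i phi psi,
      sat w (Cap i (Arrow phi psi)) <->
      (forall u v, rel (Arrow phi psi) u v -> agrel i w u v);
  sat_cap_seq : forall w i A B,
      sat w (Cap i (Seq A B)) <->
      (sat w (Cap i A) /\ forall w', rel A w w' -> sat w' (Cap i B));
  sat_cap_choice : forall w i A B,
      sat w (Cap i (Choice A B)) <-> (sat w (Cap i A) /\ sat w (Cap i B));
  sat_cap_star : forall w i A,
      sat w (Cap i (Star A)) <->
      (exists phi, sat w phi /\
         forall v, sat v phi -> sat v (Cap i A) /\ sat v (Box A phi));
  rel_test : forall phi w w', rel (Test phi) w w' <-> (w = w' /\ sat w phi);
  rel_arrow : forall phi psi w w',
      rel (Arrow phi psi) w w' <->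
      (exists A, SigmaPlus A /\
         (forall v, sat v phi -> forall v', rel A v v' -> sat v' psi) /\
         rel A w w');
  rel_seq : forall A B w w',
      rel (Seq A B) w w' <-> (exists u, rel A w u /\ rel B u w');
  rel_choice : forall A B w w',
      rel (Choice A B) w w' <-> (rel A w w' \/ rel B w w');
  rel_star : forall A w w',
      rel (Star A) w w' <-> clos_refl_trans W (rel A) w w';
  normality : forall i w u v,
      agrel i w u v <->
      ((exists phi psi, sat w (Cap i (Arrow phi psi)) /\ rel (Arrow phi psi) u v)
       \/ (exists a, sat w (Cap i (PAtom a)) /\ rel (PAtom a) u v))
}.

Definition valid (phi : form) : Prop :=
  forall (M : Lmodel) (w : W M), sat M w phi.

(* alpha-formulas: alpha, first component, optional second component *)
Inductive IsAlpha : form -> form -> option form -> Prop :=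
| al_negneg phi : IsAlpha (Neg (Neg phi)) phi None
| al_negtest psi phi : IsAlpha (Neg (Box (Test psi) phi)) (Neg phi) (Some psi)
| al_seq A B phi : IsAlpha (Box (Seq A B) phi) (Box A (Box B phi)) None
| al_negseq A B phi :
    IsAlpha (Neg (Box (Seq A B) phi)) (Neg (Box A (Box B phi))) None
| al_choice A B phi :
    IsAlpha (Box (Choice A B) phi) (Box A phi) (Some (Box B phi))
| al_star A phi :
    IsAlpha (Box (Star A) phi) phi (Some (Box A (Box (Star A) phi)))
| al_capseq i A B :
    IsAlpha (Cap i (Seq A B)) (Cap i A) (Some (Box A (Cap i B)))
| al_capchoice i A B :
    IsAlpha (Cap i (Choice A B)) (Cap i A) (Some (Cap i B))
| al_capstar i A :
    IsAlpha (Cap i (Star A)) (Box (Star A) (Cap i A)) None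
| al_negcapstar i A :
    IsAlpha (Neg (Cap i (Star A))) (Neg (Box (Star A) (Cap i A))) None.

Definition conj_comp (a1 : form) (a2 : option form) : form :=
  match a2 with None => a1 | Some a => And a1 a end.

Inductive IsBeta : form -> form -> form -> Prop :=
| be_test psi phi : IsBeta (Box (Test psi) phi) (Neg psi) phi
| be_arrow phi psi th :
    IsBeta (Box (Arrow phi psi) th)
      (And phi (Box (Star Omega) (Box (Test psi) th)))
      (Box (Star Omega) th)
| be_negarrow phi psi th :
    IsBeta (Neg (Box (Arrow phi psi) th))
      (Neg (Box (Test (Neg phi)) (Box Omega th)))
      (Neg (Box Omega (Box (Test psi) th)))
| be_negchoice A B phi :
    IsBeta (Neg (Box (Choice A B) phi)) (Neg (Box A phi)) (Neg (Box B phi))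
| be_negstar A phi :
    IsBeta (Neg (Box (Star A) phi)) (Neg phi) (Neg (Box A (Box (Star A) phi)))
| be_negcapseq i A B :
    IsBeta (Neg (Cap i (Seq A B))) (Neg (Cap i A)) (Neg (Box A (Cap i B)))
| be_negcapchoice i A B :
    IsBeta (Neg (Cap i (Choice A B))) (Neg (Cap i A)) (Neg (Cap i B)).

(* Main.v *)
Require Import Defs.
From Stdlib Require Import Relations.Relation_Operators Relations.Operators_Properties Classical.

Section S.
Variable M : Lmodel.
Notation sat := (sat M).
Notation rel := (rel M).

Lemma s_impl w p q : sat w (Impl p q) <-> (sat w p -> sat w q).
Proof.
  unfold Impl; rewrite sat_box; split.
  - intros H Hp; apply H; apply rel_test; auto.
  - intros H w' Hr; apply rel_test in Hr as [<- Hp]; auto.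
Qed.

Lemma s_and w p q : sat w (And p q) <-> (sat w p /\ sat w q).
Proof.
  unfold And; rewrite sat_neg, s_impl, sat_neg; tauto.
Qed.

Lemma s_or w p q : sat w (Or p q) <-> (sat w p \/ sat w q).
Proof.
  unfold Or; rewrite s_impl, sat_neg; tauto.
Qed.

Lemma s_iff w p q : sat w (Iff p q) <-> (sat w p <-> sat w q).
Proof.
  unfold Iff; rewrite s_and, !s_impl; tauto.
Qed.

Lemma s_tt w : sat w tt.
Proof. unfold tt; rewrite s_impl; auto. Qed.

Lemma omega_sp w w' : rel Omega w w' -> exists C, SigmaPlus C /\ rel C w w'.
Proof.
  unfold Omega; rewrite rel_arrow; intros [A [HA [_ Hr]]]; eauto.
Qed.

Lemma sp_omega C w w' : SigmaPlus C -> rel C w w' -> rel Omega w w'.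
Proof.
  intros HC Hr; unfold Omega; apply rel_arrow; exists C; repeat split; auto.
  intros; apply s_tt.
Qed.

Lemma omegastar_sp w w' : rel (Star Omega) w w' -> exists C, SigmaPlus C /\ rel C w w'.
Proof.
  rewrite rel_star; intro H; induction H.
  - apply omega_sp; auto.
  - exists (Test tt); split; [constructor|]; apply rel_test; split; auto; apply s_tt.
  - destruct IHclos_refl_trans1 as [C1 [H1 R1]], IHclos_refl_trans2 as [C2 [H2 R2]].
    exists (Seq C1 C2); split; [constructor; auto|]; apply rel_seq; eauto.
Qed.

Lemma sp_omegastar C w w' : SigmaPlus C -> rel C w w' -> rel (Star Omega) w w'.
Proof.
  intros; apply rel_star; apply rt_step; eapply sp_omega; eauto.
Qed.

Lemma arrow_via_psi phi psi C w w' : SigmaPlus C -> rel C w w' -> sat w' psi ->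
  rel (Arrow phi psi) w w'.
Proof.
  intros HC Hr Hp; apply rel_arrow; exists (Seq C (Test psi)); repeat split.
  - constructor; auto; constructor.
  - intros v _ v' Hv; apply rel_seq in Hv as [u [_ Hu]]; apply rel_test in Hu as [E Hq]; subst; auto.
  - apply rel_seq; exists w'; split; auto; apply rel_test; auto.
Qed.

Lemma arrow_via_negphi phi psi C w w' : SigmaPlus C -> rel C w w' -> ~ sat w phi ->
  rel (Arrow phi psi) w w'.
Proof.
  intros HC Hr Hp; apply rel_arrow; exists (Seq (Test (Neg phi)) C); repeat split.
  - constructor; auto; constructor.
  - intros v Hv v' Hv'; apply rel_seq in Hv' as [u [Hu _]]; apply rel_test in Hu.
    destruct Hu as [<- Hn]; rewrite sat_neg in Hn; tauto.
  - apply rel_seq; exists w; split; auto; apply rel_test; rewrite sat_neg; auto.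
Qed.

Lemma star_ind_phi A phi w w' : clos_refl_trans _ (rel A) w w' ->
  (forall v, sat v phi -> sat v (Box A phi)) -> sat w phi -> sat w' phi.
Proof.
  intros H Hc; induction H; intros; auto.
  apply Hc in H0; rewrite sat_box in H0; auto.
Qed.

Lemma alpha_ok a a1 a2 : IsAlpha a a1 a2 -> forall w, sat w a <-> sat w (conj_comp a1 a2).
Proof.
  intros H w; destruct H; simpl; rewrite ?s_and.
  - rewrite !sat_neg; tauto.
  - rewrite !sat_neg, sat_box; split.
    + intros H; apply not_all_ex_not in H as [w' H].
      apply imply_to_and in H as [Hr Hn]; apply rel_test in Hr as [<- Hp]; auto.
    + intros [Hn Hp] H; apply Hn, H, rel_test; auto.
  - rewrite !sat_box; split.
    + intros H w1 H1; rewrite sat_box; intros w2 H2; apply H, rel_seq; eauto.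
    + intros H w2 Hr; apply rel_seq in Hr as [u [H1 H2]].
      specialize (H u H1); rewrite sat_box in H; auto.
  - rewrite !sat_neg, !sat_box; split; intros H1 H2; apply H1.
    + intros w2 Hr; apply rel_seq in Hr as [u [Hu H3]].
      specialize (H2 u Hu); rewrite sat_box in H2; auto.
    + intros w1 H1'; rewrite sat_box; intros w2 H3; apply H2, rel_seq; eauto.
  - rewrite !sat_box; split.
    + intro H; split; intros; apply H, rel_choice; auto.
    + intros [H1 H2] w' Hr; apply rel_choice in Hr as [|]; auto.
  - rewrite !sat_box; split.
    + intro H; split.
      * apply H, rel_star, rt_refl.
      * intros w1 H1; rewrite sat_box; intros w2 H2; apply H, rel_star.
        eapply rt_trans; [apply rt_step; eauto|apply rel_star; auto].
    + intros [H0 H1] w' Hr; apply rel_star in Hr.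
      assert (Hinv : forall v, sat v (Box (Star A) phi) -> sat v (Box A (Box (Star A) phi))).
      { intros v Hv; rewrite !sat_box in *; intros v1 Hv1; rewrite sat_box; intros v2 Hv2.
        apply Hv, rel_star; eapply rt_trans; [apply rt_step; eauto|apply rel_star; auto]. }
      assert (Hw : sat w (Box (Star A) phi)).
      { rewrite sat_box; intros w2 Hr2; apply rel_star in Hr2.
        apply clos_rt_rt1n in Hr2; destruct Hr2 as [|y z Hxy Hyz]; auto.
        specialize (H1 y Hxy); rewrite sat_box in H1; apply H1, rel_star, clos_rt1n_rt; exact Hyz. }
      pose proof (star_ind_phi _ _ _ _ Hr Hinv Hw) as Hf.
      rewrite sat_box in Hf; apply Hf, rel_star, rt_refl.
  - rewrite sat_cap_seq, sat_box; tauto.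
  - rewrite sat_cap_choice; tauto.
  - rewrite sat_cap_star, sat_box; split.
    + intros [phi [Hp Hc]] w' Hr; apply rel_star in Hr.
      assert (Hinv : forall v, sat v phi -> sat v (Box A phi)) by (intros; apply Hc; auto).
      apply Hc, (star_ind_phi _ _ _ _ Hr Hinv Hp).
    + intros H; exists (Box (Star A) (Cap i A)); split; [rewrite sat_box; auto|].
      intros v Hv; rewrite sat_box in Hv; split.
      * apply Hv, rel_star, rt_refl.
      * rewrite sat_box; intros v1 H1; rewrite sat_box; intros v2 H2; apply Hv, rel_star.
        eapply rt_trans; [apply rt_step; eauto|apply rel_star; auto].
  - rewrite !sat_neg, sat_cap_star, sat_box; split; intros H1 H2; apply H1.
    + exists (Box (Star A) (Cap i A)); split; [rewrite sat_box; auto|].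
      intros v Hv; rewrite sat_box in Hv; split.
      * apply Hv, rel_star, rt_refl.
      * rewrite sat_box; intros v1 H1'; rewrite sat_box; intros v2 H3; apply Hv, rel_star.
        eapply rt_trans; [apply rt_step; eauto|apply rel_star; auto].
    + intros w' Hr; destruct H2 as [phi [Hp Hc]]; apply rel_star in Hr.
      assert (Hinv : forall v, sat v phi -> sat v (Box A phi)) by (intros; apply Hc; auto).
      apply Hc, (star_ind_phi _ _ _ _ Hr Hinv Hp).
Qed.

Lemma arrow_box phi psi th w : sat w (Box (Arrow phi psi) th) <->
  (sat w (Box (Test (Neg phi)) (Box Omega th)) /\ sat w (Box Omega (Box (Test psi) th))).
Proof.
  rewrite !sat_box; split.
  - intro H; split.
    + intros w1 H1; apply rel_test in H1 as [<- Hn]; rewrite sat_neg in Hn.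
      rewrite sat_box; intros w2 H2; apply omega_sp in H2 as [C [HC R]].
      apply H; eapply arrow_via_negphi; eauto.
    + intros w1 H1; rewrite sat_box; intros w2 H2; apply rel_test in H2 as [<- Hp].
      apply omega_sp in H1 as [C [HC R]]; apply H; eapply arrow_via_psi; eauto.
  - intros [H1 H2] w' Hr.
    pose proof Hr as Hr'; apply rel_arrow in Hr' as [A [HA [Hv Ra]]].
    destruct (classic (sat w phi)) as [Hp|Hn].
    + specialize (H2 w' (sp_omega _ _ _ HA Ra)); rewrite sat_box in H2.
      apply H2, rel_test; split; auto; eapply Hv; eauto.
    + assert (Ht : rel (Test (Neg phi)) w w) by (apply rel_test; rewrite sat_neg; auto).
      specialize (H1 w Ht); rewrite sat_box in H1; apply H1; eapply sp_omega; eauto.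
Qed.

Lemma beta_ok b b1 b2 : IsBeta b b1 b2 -> forall w, sat w b <-> sat w (Or b1 b2).
Proof.
  intros H w; rewrite s_or; destruct H.
  - rewrite sat_box, sat_neg; split.
    + intro H; destruct (classic (sat w psi)); [right; apply H, rel_test; auto|left; auto].
    + intros [H|H] w' Hr; apply rel_test in Hr as [<- Hp]; tauto.
  - rewrite s_and; split.
    + intro H; destruct (classic (sat w phi)) as [Hp|Hn].
      * left; split; auto; rewrite sat_box; intros w1 H1; rewrite sat_box;
          intros w2 H2; apply rel_test in H2 as [<- Hq].
        apply omegastar_sp in H1 as [C [HC R]]; rewrite sat_box in H.
        apply H; eapply arrow_via_psi; eauto.
      * right; rewrite sat_box; intros w1 H1.
        apply omegastar_sp in H1 as [C [HC R]]; rewrite sat_box in H.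
        apply H; eapply arrow_via_negphi; eauto.
    + rewrite !sat_box; intros [[Hp H]|H] w' Hr;
        pose proof Hr as Hr'; apply rel_arrow in Hr' as [A [HA [Hv Ra]]].
      * specialize (H w' (sp_omegastar _ _ _ HA Ra)); rewrite sat_box in H.
        apply H, rel_test; split; auto; eapply Hv; eauto.
      * apply H; eapply sp_omegastar; eauto.
  - rewrite !sat_neg, arrow_box; tauto.
  - rewrite !sat_neg, !sat_box; split.
    + intro H; apply not_all_ex_not in H as [w' H]; apply imply_to_and in H as [Hr Hn].
      apply rel_choice in Hr as [Hr|Hr]; [left|right]; intro H'; apply Hn, H'; auto.
    + intros [H|H] H'; apply H; intros; apply H', rel_choice; auto.
  - rewrite !sat_neg, !sat_box.
    assert (E : (forall w', rel (Star A) w w' -> sat w' phi) <->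
      (sat w phi /\ forall w1, rel A w w1 -> sat w1 (Box (Star A) phi))).
    { split.
      - intro H; split; [apply H, rel_star, rt_refl|].
        intros w1 H1; rewrite sat_box; intros w2 H2; apply H, rel_star.
        eapply rt_trans; [apply rt_step; eauto|apply rel_star; auto].
      - intros [H0 H1] w' Hr; apply rel_star, clos_rt_rt1n in Hr; destruct Hr; auto.
        specialize (H1 y H); rewrite sat_box in H1; apply H1, rel_star, clos_rt1n_rt; auto. }
    rewrite E; tauto.
  - rewrite !sat_neg, sat_cap_seq, sat_box; tauto.
  - rewrite !sat_neg, sat_cap_choice; tauto.
Qed.

End S.

Theorem mainTheorem6 :
  (forall (a a1 : form) (a2 : option form),
      IsAlpha a a1 a2 -> valid (Iff a (conj_comp a1 a2))) /\
  (forall b b1 b2 : form, IsBeta b b1 b2 -> valid (Iff b (Or b1 b2))).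
Proof.
  split.
  - intros a a1 a2 H M w; apply s_iff, alpha_ok; auto.
  - intros b b1 b2 H M w; apply s_iff, beta_ok; auto.
Qed.
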